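(* There is a constant $C=C(n,m,\alpha)>0$ such that for all $x,y\in\mathbb{R}^n_+$, $x\neq y$, $$G_{2t}^+(x,y)\le\frac{C}{|x-y|^{n-2t}}.$$
   Context: $n\ge2$, $m\in\mathbb{N}$, $2m<n$, $0<\alpha<2$, $t=m+\alpha/2<n/2$. $\mathbb{R}^n_+=\{x: x_n>0\}$. $G_{2m}^+(x,y)=c_{n,m}(|x-y|^{2m-n}-|x^*-y|^{2m-n})$, $x^*=(x',-x_n)$; $G_\alpha^+(x,y)=\frac{A_{n,\alpha}}{s^{(n-\alpha)/2}}\Big[1-\frac{B_{n,\alpha}}{(s+\tau)^{(n-2)/2}}\int_0^{s/\tau}\frac{(s-\tau b)^{(n-2)/2}}{b^{\alpha/2}(1+b)}db\Big]$ with $s=|x-y|^2$, $\tau=4x_ny_n$ (Green's function of $(-\Delta)^{\alpha/2}$ on $\mathbb{R}^n_+$); $G_{2t}^+(x,y)=\int_{\mathbb{R}^n_+}G_{2m}^+(x,z)G_\alpha^+(z,y)dz$. *)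

(* Defs.v *)
From Stdlib Require Import Reals Lra Lia List ClassicalEpsilon.
Import ListNotations.
Open Scope R_scope.

(* Points of R^n are functions nat -> R; only coordinates 0..n-1 matter.
   The last coordinate x_n of the paper is index (n-1). *)
Definition pt := nat -> R.

Fixpoint sumR (k : nat) (f : nat -> R) : R :=
  match k with O => 0 | S k' => sumR k' f + f k' end.

Fixpoint prodR (k : nat) (f : nat -> R) : R :=
  match k with O => 1 | S k' => prodR k' f * f k' end.

Definition edist (n : nat) (x y : pt) : R :=
  sqrt (sumR n (fun i => (x i - y i) ^ 2)).

Definition refl (n : nat) (x : pt) : pt :=
  fun i => if Nat.eqb i (n - 1)%nat then - x i else x i.

Definition in_Hplus (n : nat) (x : pt) : Prop := 0 < x (n - 1)%nat.

Definition pt_neq (n : nat) (x y : pt) : Prop :=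
  ~ (forall i, (i < n)%nat -> x i = y i).

(* A box [a_0,b_0) x ... x [a_{n-1},b_{n-1}); a step function is a finite list of
   boxes with coefficients: s(z) = sum_j c_j 1_{box_j}(z). *)
Fixpoint boxind (k : nat) (a b z : pt) : R :=
  match k with
  | O => 1
  | S k' =>
      (if Rle_dec (a k') (z k') then (if Rlt_dec (z k') (b k') then 1 else 0) else 0)
      * boxind k' a b z
  end.

Definition vol (n : nat) (a b : pt) : R := prodR n (fun i => b i - a i).

Definition step := list (pt * pt * R).

Definition stepval (n : nat) (s : step) (z : pt) : R :=
  fold_right (fun '(a, b, c) acc => c * boxind n a b z + acc) 0 s.

Definition stepint (n : nat) (s : step) : R :=
  fold_right (fun '(a, b, c) acc => c * vol n a b + acc) 0 s.

Definition admissible (n : nat) (Dbox : pt -> pt -> Prop) (Dpt : pt -> Prop)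
  (f : pt -> R) (s : step) : Prop :=
  (forall a b c, In (a, b, c) s ->
       0 <= c /\ (forall i, (i < n)%nat -> a i <= b i) /\ Dbox a b) /\
  (forall z, Dpt z -> stepval n s z <= f z).

(* The set of integrals of admissible step functions; its supremum is the
   Lebesgue integral of f over the domain (for f >= 0 lower semicontinuous
   off finitely many points, as is the case here). *)
Definition lower_sums (n : nat) (Dbox : pt -> pt -> Prop) (Dpt : pt -> Prop)
  (f : pt -> R) : R -> Prop :=
  fun S => exists s, admissible n Dbox Dpt f s /\ S = stepint n s.

(* "int_D f <= B" : every lower sum is <= B (in particular the integral is finite). *)
Definition integral_le (n : nat) (Dbox : pt -> pt -> Prop) (Dpt : pt -> Prop)
  (f : pt -> R) (B : R) : Prop :=
  forall S, lower_sums n Dbox Dpt f S -> S <= B.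

Definition integral_val (n : nat) (Dbox : pt -> pt -> Prop) (Dpt : pt -> Prop)
  (f : pt -> R) : R :=
  epsilon (inhabits 0) (fun I => is_lub (lower_sums n Dbox Dpt f) I).

Definition Hbox (n : nat) : pt -> pt -> Prop := fun a _ => 0 <= a (n - 1)%nat.

Definition int_0_L (L : R) (g : R -> R) : R :=
  integral_val 1 (fun a b => 0 <= a 0%nat /\ b 0%nat <= L)
    (fun z => 0 < z 0%nat <= L) (fun z => g (z 0%nat)).

Definition G2m (n m : nat) (c : R) (x y : pt) : R :=
  c * (Rpower (edist n x y) (INR (2 * m) - INR n)
       - Rpower (edist n (refl n x) y) (INR (2 * m) - INR n)).

Definition Galpha (n : nat) (alpha A B : R) (x y : pt) : R :=
  let s := (edist n x y) ^ 2 in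
  let tau := 4 * x (n - 1)%nat * y (n - 1)%nat in
  A / Rpower s ((INR n - alpha) / 2) *
  (1 - B / Rpower (s + tau) ((INR n - 2) / 2) *
       int_0_L (s / tau)
         (fun b => Rpower (s - tau * b) ((INR n - 2) / 2)
                   / (Rpower b (alpha / 2) * (1 + b)))).

(* The integrand of G_{2t}^+(x,y) = int_{R^n_+} G_{2m}^+(x,z) G_alpha^+(z,y) dz *)
Definition G2t_integrand (n m : nat) (alpha c A B : R) (x y : pt) : pt -> R :=
  fun z => G2m n m c x z * Galpha n alpha A B z y.

(* Main.v *)
Require Import Defs.
From Stdlib Require Import Reals.
From Stdlib Require Import Lra Lia List ClassicalEpsilon Classical.
From Coquelicot Require Coquelicot.
Import ListNotations.
Open Scope R_scope.

Module StepM.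
Import Coquelicot.Coquelicot.

Definition ind (a b t : R) : R :=
  if Rle_dec a t then (if Rlt_dec t b then 1 else 0) else 0.

Lemma ind_01 a b t : 0 <= ind a b t <= 1.
Proof. unfold ind; destruct Rle_dec; [destruct Rlt_dec|]; lra. Qed.

Fixpoint f1 (l : list (R*R*R)) (t : R) : R :=
  match l with [] => 0 | (al,be,w)::l' => w * ind al be t + f1 l' t end.
Fixpoint I1 (l : list (R*R*R)) : R :=
  match l with [] => 0 | (al,be,w)::l' => w * (be - al) + I1 l' end.
Fixpoint bnd1 (l : list (R*R*R)) : R :=
  match l with [] => 0 | (al,be,w)::l' => Rabs al + Rabs be + bnd1 l' end.

Lemma bnd1_ge0 l : 0 <= bnd1 l.
Proof. induction l as [|[[a b] w] l IH]; simpl; [lra|]. pose proof (Rabs_pos a); pose proof (Rabs_pos b); lra. Qed.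


Lemma chasR (f : R -> R) a b c l1 l2 : is_RInt f a b l1 -> is_RInt f b c l2 -> is_RInt f a c (l1 + l2).
Proof. intros h1 h2. exact (is_RInt_Chasles f a b c l1 l2 h1 h2). Qed.
Lemma constR a b (v : R) : is_RInt (fun _ => v) a b ((b - a) * v).
Proof. exact (is_RInt_const a b v). Qed.
Lemma plusR (f g : R -> R) a b l1 l2 : is_RInt f a b l1 -> is_RInt g a b l2 -> is_RInt (fun t => f t + g t) a b (l1 + l2).
Proof. intros h1 h2. exact (is_RInt_plus f g a b l1 l2 h1 h2). Qed.
Lemma scalR (f : R -> R) a b k l : is_RInt f a b l -> is_RInt (fun t => k * f t) a b (k * l).
Proof. intros h. exact (is_RInt_scal f a b k l h). Qed.
Lemma extR (f g : R -> R) a b l : (forall x, Rmin a b < x < Rmax a b -> f x = g x) -> is_RInt f a b l -> is_RInt g a b l.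
Proof. intros h1 h2. exact (is_RInt_ext f g a b l h1 h2). Qed.

Lemma is_RInt_ind a b L H : L <= a -> a <= b -> b <= H ->
  is_RInt (ind a b) L H (b - a).
Proof.
  intros h1 h2 h3.
  replace (b - a) with ((a - L) * 0 + (b - a) * 1 + (H - b) * 0) by ring.
  apply chasR with b. apply chasR with a.
  - apply extR with (fun _ => 0). 2: apply constR.
    intros x hx. rewrite Rmin_left in hx by lra. rewrite Rmax_right in hx by lra.
    unfold ind; destruct Rle_dec; [lra|auto].
  - apply extR with (fun _ => 1). 2: apply constR.
    intros x hx. rewrite Rmin_left in hx by lra. rewrite Rmax_right in hx by lra.
    unfold ind; destruct Rle_dec; [destruct Rlt_dec|]; lra.
  - apply extR with (fun _ => 0). 2: apply constR.
    intros x hx. rewrite Rmin_left in hx by lra. rewrite Rmax_right in hx by lra.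
    unfold ind; destruct Rle_dec; [destruct Rlt_dec|]; lra.
Qed.

Lemma is_RInt_f1 l L H : (forall al be w, In (al,be,w) l -> al <= be) ->
  L <= - bnd1 l -> bnd1 l <= H -> is_RInt (f1 l) L H (I1 l).
Proof.
  induction l as [|[[a b] w] l IH]; simpl; intros hw hL hH.
  - assert (h := constR L H 0). replace ((H - L) * 0) with 0 in h by ring. exact h.
  - pose proof (bnd1_ge0 l). pose proof (Rabs_pos a); pose proof (Rabs_pos b).
    pose proof (Rle_abs a); pose proof (Rle_abs b).
    pose proof (Rabs_maj2 a); pose proof (Rabs_maj2 b).
    assert (a <= b) by (eapply hw; left; reflexivity).
    apply (plusR (fun t => w * (ind a b t)) (f1 l) L H (w * (b - a)) (I1 l)).
    + apply scalR. apply is_RInt_ind; lra.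
    + apply IH; [intros; eapply hw; right; eassumption| lra | lra].
Qed.

Lemma exC1 (f : R -> R) a b c : a <= b <= c -> ex_RInt f a c -> ex_RInt f a b.
Proof. exact (ex_RInt_Chasles_1 f a b c). Qed.
Lemma exC2 (f : R -> R) a b c : a <= b <= c -> ex_RInt f a c -> ex_RInt f b c.
Proof. exact (ex_RInt_Chasles_2 f a b c). Qed.
Lemma RIC (f : R -> R) a b c : ex_RInt f a b -> ex_RInt f b c -> RInt f a b + RInt f b c = RInt f a c.
Proof. exact (RInt_Chasles f a b c). Qed.
Lemma RIU (f : R -> R) a b l : is_RInt f a b l -> RInt f a b = l.
Proof. exact (is_RInt_unique f a b l). Qed.

Lemma one_dim l t0 : (forall al be w, In (al,be,w) l -> al <= be) ->
  (forall t, t <> t0 -> 0 <= f1 l t) -> 0 <= I1 l.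
Proof.
  intros hw hpos.
  set (L := - (bnd1 l + Rabs t0 + 1)). set (H := bnd1 l + Rabs t0 + 1).
  pose proof (bnd1_ge0 l). pose proof (Rabs_pos t0). pose proof (Rle_abs t0). pose proof (Rabs_maj2 t0).
  assert (hI : is_RInt (f1 l) L H (I1 l)) by (apply is_RInt_f1; unfold L, H; auto; lra).
  assert (hex : ex_RInt (f1 l) L H) by (eexists; eauto).
  rewrite <- (RIU _ _ _ _ hI).
  rewrite <- (RIC (f1 l) L t0 H).
  - 
    assert (0 <= RInt (f1 l) L t0).
    { apply RInt_ge_0. unfold L; lra. apply exC1 with H. unfold L, H; lra. auto.
      intros x hx; apply hpos; lra. }
    assert (0 <= RInt (f1 l) t0 H).
    { apply RInt_ge_0. unfold H; lra. apply exC2 with L. unfold L, H; lra. auto.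
      intros x hx; apply hpos; lra. }
    lra.
  - apply exC1 with H. unfold L, H; lra. auto.
  - apply exC2 with L. unfold L, H; lra. auto.
Qed.

Definition wf (k : nat) (u : step) : Prop :=
  forall a b c, In (a,b,c) u -> forall i, (i < k)%nat -> a i <= b i.

Definition slice (k : nat) (u : step) (t : R) : step :=
  map (fun p => let '(a,b,c) := p in (a,b,c * ind (a k) (b k) t)) u.
Definition proj (k : nat) (u : step) : list (R*R*R) :=
  map (fun p => let '(a,b,c) := p in (a k, b k, c * vol k a b)) u.

Lemma sv_S k u z : stepval (S k) u z = stepval k (slice k u (z k)) z.
Proof.
  induction u as [|[[a b] c] u IH]; simpl; [reflexivity|].
  rewrite IH. unfold ind. ring.
Qed.

Lemma boxind_ext k a b z z' : (forall i, (i < k)%nat -> z i = z' i) ->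
  boxind k a b z = boxind k a b z'.
Proof.
  induction k; simpl; intros h; [reflexivity|].
  rewrite IHk by (intros; apply h; lia). rewrite (h k) by lia. reflexivity.
Qed.

Lemma sv_ext k u z z' : (forall i, (i < k)%nat -> z i = z' i) ->
  stepval k u z = stepval k u z'.
Proof.
  intros h. induction u as [|[[a b] c] u IH]; simpl; [reflexivity|].
  rewrite IH, (boxind_ext k a b z z' h). reflexivity.
Qed.

Lemma si_slice k u t : stepint k (slice k u t) = f1 (proj k u) t.
Proof.
  induction u as [|[[a b] c] u IH]; simpl; [reflexivity|]. rewrite IH. ring.
Qed.

Lemma si_S k u : stepint (S k) u = I1 (proj k u).
Proof.
  induction u as [|[[a b] c] u IH]; simpl; [reflexivity|]. rewrite IH. unfold vol; simpl. ring.
Qed.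

Lemma wf_slice k u t : wf (S k) u -> wf k (slice k u t).
Proof.
  intros h a b c hin i hi. unfold slice in hin. apply in_map_iff in hin.
  destruct hin as [[[a' b'] c'] [he hin]]. inversion he; subst.
  eapply h; eauto.
Qed.

Lemma wf_proj k u : wf (S k) u -> forall al be w, In (al,be,w) (proj k u) -> al <= be.
Proof.
  intros h al be w hin. unfold proj in hin. apply in_map_iff in hin.
  destruct hin as [[[a' b'] c'] [he hin]]. inversion he; subst.
  eapply h; eauto.
Qed.

Definition upd (z : pt) (k : nat) (t : R) : pt := fun i => if Nat.eqb i k then t else z i.

Lemma pos_slice k u t : (forall z, z k = t -> 0 <= stepval (S k) u z) ->
  forall z, 0 <= stepval k (slice k u t) z.
Proof.
  intros h z. rewrite (sv_ext k _ z (upd z k t)).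
  - replace t with (upd z k t k) at 1 by (unfold upd; rewrite Nat.eqb_refl; reflexivity).
    rewrite <- sv_S. apply h. unfold upd; rewrite Nat.eqb_refl; reflexivity.
  - intros i hi. unfold upd. destruct (Nat.eqb_spec i k); [lia|reflexivity].
Qed.

Lemma pos_full k : forall u, wf k u -> (forall z, 0 <= stepval k u z) -> 0 <= stepint k u.
Proof.
  induction k; intros u hw hp.
  - specialize (hp (fun _ => 0)).
    assert (e : stepint 0 u = stepval 0 u (fun _ => 0)).
    { clear. induction u as [|[[a b] c] u IH]; simpl; [reflexivity|]. rewrite IH. unfold vol; simpl. ring. }
    lra.
  - rewrite si_S. apply one_dim with 0. apply wf_proj; auto.
    intros t _. rewrite <- si_slice. apply IHk. apply wf_slice; auto.
    apply pos_slice. intros; auto.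
Qed.

Lemma pos_exc k u t0 : wf (S k) u -> (forall z, z k <> t0 -> 0 <= stepval (S k) u z) ->
  0 <= stepint (S k) u.
Proof.
  intros hw hp. rewrite si_S. apply one_dim with t0. apply wf_proj; auto.
  intros t ht. rewrite <- si_slice. apply pos_full. apply wf_slice; auto.
  apply pos_slice. intros z hz; apply hp; congruence.
Qed.

End StepM.
Import StepM.


Lemma abs2 x : - x <= Rabs x.
Proof. unfold Rabs; destruct Rcase_abs; lra. Qed.

Definition negs (u : step) : step := map (fun p => let '(a,b,c) := p in (a,b,-c)) u.

Lemma sv_app k u v z : stepval k (u ++ v) z = stepval k u z + stepval k v z.
Proof. induction u as [|[[a b] c] u IH]; simpl; [ring|]. rewrite IH; ring. Qed.
Lemma si_app k u v : stepint k (u ++ v) = stepint k u + stepint k v.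
Proof. induction u as [|[[a b] c] u IH]; simpl; [ring|]. rewrite IH; ring. Qed.
Lemma sv_neg k u z : stepval k (negs u) z = - stepval k u z.
Proof. induction u as [|[[a b] c] u IH]; simpl; [ring|]. rewrite IH; ring. Qed.
Lemma si_neg k u : stepint k (negs u) = - stepint k u.
Proof. induction u as [|[[a b] c] u IH]; simpl; [ring|]. rewrite IH; ring. Qed.
Lemma wf_app k u v : wf k u -> wf k v -> wf k (u ++ v).
Proof. intros h1 h2 a b c hin. apply in_app_or in hin. destruct hin; eauto. Qed.
Lemma wf_neg k u : wf k u -> wf k (negs u).
Proof.
  intros h a b c hin. unfold negs in hin. apply in_map_iff in hin.
  destruct hin as [[[a' b'] c'] [he hin]]. inversion he; subst. eapply h; eauto.
Qed.

Lemma mono_exc k s t t0 : wf (S k) s -> wf (S k) t ->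
  (forall z, z k <> t0 -> stepval (S k) s z <= stepval (S k) t z) ->
  stepint (S k) s <= stepint (S k) t.
Proof.
  intros hs ht h.
  assert (0 <= stepint (S k) (t ++ negs s)).
  { apply pos_exc with t0. apply wf_app; auto. apply wf_neg; auto.
    intros z hz. rewrite sv_app, sv_neg. specialize (h z hz). lra. }
  rewrite si_app, si_neg in H. lra.
Qed.

Definition scs (l : R) (u : step) : step := map (fun p => let '(a,b,c) := p in (a,b,l*c)) u.
Lemma sv_scs k l u z : stepval k (scs l u) z = l * stepval k u z.
Proof. induction u as [|[[a b] c] u IH]; simpl; [ring|]. rewrite IH; ring. Qed.
Lemma si_scs k l u : stepint k (scs l u) = l * stepint k u.
Proof. induction u as [|[[a b] c] u IH]; simpl; [ring|]. rewrite IH; ring. Qed.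
Lemma wf_scs k l u : wf k u -> wf k (scs l u).
Proof.
  intros h a b c hin. unfold scs in hin. apply in_map_iff in hin.
  destruct hin as [[[a' b'] c'] [he hin]]. inversion he; subst. eapply h; eauto.
Qed.

Definition cpos (u : step) : Prop := forall a b c, In (a,b,c) u -> 0 <= c.
Lemma cpos_app u v : cpos u -> cpos v -> cpos (u ++ v).
Proof. intros h1 h2 a b c hin. apply in_app_or in hin. destruct hin; eauto. Qed.
Lemma cpos_scs l u : 0 <= l -> cpos u -> cpos (scs l u).
Proof.
  intros hl h a b c hin. unfold scs in hin. apply in_map_iff in hin.
  destruct hin as [[[a' b'] c'] [he hin]]. inversion he; subst.
  apply Rmult_le_pos; auto. eapply h; eauto.
Qed.

Lemma boxind_01 k a b z : 0 <= boxind k a b z <= 1.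
Proof.
  induction k; simpl; [lra|].
  destruct Rle_dec; [destruct Rlt_dec|]; lra.
Qed.

Lemma sv_nonneg k u z : cpos u -> 0 <= stepval k u z.
Proof.
  intros h. induction u as [|[[a b] c] u IH]; simpl; [lra|].
  assert (0 <= c) by (eapply h; left; reflexivity).
  pose proof (boxind_01 k a b z).
  assert (0 <= stepval k u z) by (apply IH; intros ? ? ? hin; eapply h; right; eauto).
  nra.
Qed.

Fixpoint mass (u : step) : R := match u with [] => 0 | (_,_,c)::u' => c + mass u' end.
Lemma sv_mass k u z : cpos u -> stepval k u z <= mass u.
Proof.
  intros h. induction u as [|[[a b] c] u IH]; simpl; [lra|].
  assert (0 <= c) by (eapply h; left; reflexivity).
  pose proof (boxind_01 k a b z).
  assert (stepval k u z <= mass u) by (apply IH; intros ? ? ? hin; eapply h; right; eauto).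
  nra.
Qed.

Fixpoint mk (K : nat) (A B : nat -> pt) (C : nat -> R) : step :=
  match K with O => [] | S K' => (A K', B K', C K') :: mk K' A B C end.

Lemma cpos_mk K A B C : (forall j, 0 <= C j) -> cpos (mk K A B C).
Proof.
  intros h. induction K; simpl; intros a b c hin; [contradiction|].
  destruct hin as [he|hin]; [inversion he; subst; auto| eapply IHK; eauto].
Qed.
Lemma wf_mk k K A B C : (forall j i, (i < k)%nat -> A j i <= B j i) -> wf k (mk K A B C).
Proof.
  intros h. induction K; simpl; intros a b c hin; [contradiction|].
  destruct hin as [he|hin]; [inversion he; subst; auto| eapply IHK; eauto].
Qed.
Lemma sv_mk_ge k K A B C z j : (forall j, 0 <= C j) -> (j < K)%nat ->
  C j * boxind k (A j) (B j) z <= stepval k (mk K A B C) z.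
Proof.
  intros h. induction K; intros hj; [lia|]. simpl.
  destruct (Nat.eq_dec j K).
  - subst. pose proof (sv_nonneg k (mk K A B C) z (cpos_mk K A B C h)). lra.
  - pose proof (IHK ltac:(lia)). pose proof (h K). pose proof (boxind_01 k (A K) (B K) z). nra.
Qed.
Lemma si_mk k K A B C : stepint k (mk K A B C) = sumR K (fun j => C j * vol k (A j) (B j)).
Proof. induction K; simpl; [reflexivity|]. rewrite IHK; ring. Qed.

Definition cl (p : pt) (r : R) : pt := fun i => p i - r.
Definition cr (p : pt) (r : R) : pt := fun i => p i + r.

Lemma vol_cube k p r : vol k (cl p r) (cr p r) = (2 * r) ^ k.
Proof. unfold vol, cl, cr. induction k; simpl; [ring|]. rewrite IHk. ring. Qed.

Lemma wf_cube k p r : 0 <= r -> forall i, (i < k)%nat -> cl p r i <= cr p r i.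
Proof. intros; unfold cl, cr; lra. Qed.

Fixpoint maxR (k : nat) (f : nat -> R) : R :=
  match k with O => 0 | S k' => Rmax (maxR k' f) (f k') end.
Definition ninf (k : nat) (z p : pt) : R := maxR k (fun i => Rabs (z i - p i)).

Lemma maxR_ge k f i : (i < k)%nat -> f i <= maxR k f.
Proof.
  induction k; intros hi; [lia|]. simpl. destruct (Nat.eq_dec i k).
  - subst. apply Rmax_r.
  - eapply Rle_trans; [apply IHk; lia| apply Rmax_l].
Qed.
Lemma maxR_le k f B : 0 <= B -> (forall i, (i < k)%nat -> f i <= B) -> maxR k f <= B.
Proof.
  induction k; intros hB h; simpl; [auto|]. apply Rmax_lub; auto.
Qed.
Lemma ninf_ge0 k z p : 0 <= ninf k z p.
Proof. unfold ninf; induction k; simpl; [lra|]. eapply Rle_trans; [apply IHk|apply Rmax_l]. Qed.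
Lemma ninf_coord k z p i : (i < k)%nat -> Rabs (z i - p i) <= ninf k z p.
Proof. intros; unfold ninf; apply (maxR_ge k (fun i => Rabs (z i - p i))); auto. Qed.
Lemma ninf_le k z p B : 0 <= B -> (forall i, (i < k)%nat -> Rabs (z i - p i) <= B) -> ninf k z p <= B.
Proof. intros; unfold ninf; apply maxR_le; auto. Qed.

Lemma boxind_one k a b z : (forall i, (i < k)%nat -> a i <= z i < b i) -> boxind k a b z = 1.
Proof.
  induction k; simpl; intros h; [reflexivity|].
  rewrite IHk by (intros; apply h; lia). destruct (h k ltac:(lia)).
  destruct Rle_dec; [destruct Rlt_dec|]; lra.
Qed.
Lemma boxind_zero k a b z i : (i < k)%nat -> (z i < a i \/ b i <= z i) -> boxind k a b z = 0.
Proof.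
  induction k; simpl; intros hi h; [lia|].
  destruct (Nat.eq_dec i k).
  - subst. destruct Rle_dec; [destruct Rlt_dec|]; try lra.
  - rewrite IHk by (auto; lia). ring.
Qed.

Lemma cube_in k p r z : ninf k z p < r -> boxind k (cl p r) (cr p r) z = 1.
Proof.
  intros h. apply boxind_one. intros i hi. pose proof (ninf_coord k z p i hi).
  unfold cl, cr. pose proof (Rle_abs (z i - p i)). pose proof (abs2 (z i - p i)). lra.
Qed.


Lemma rp_pos x y : 0 < Rpower x y.
Proof. unfold Rpower; apply exp_pos. Qed.

Lemma rp_anti u v e : 0 < u <= v -> 0 <= e -> Rpower v (- e) <= Rpower u (- e).
Proof.
  intros h he. rewrite !Rpower_Ropp. apply Rinv_le_contravar. apply rp_pos.
  apply Rle_Rpower_l; auto.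
Qed.

Lemma rp_inv2 y : Rpower (/ 2) y = Rpower 2 (- y).
Proof. unfold Rpower. rewrite ln_Rinv by lra. f_equal. ring. Qed.

Lemma rp2_lt1 y : y < 0 -> Rpower 2 y < 1.
Proof. intros h. rewrite <- (Rpower_O 2) by lra. apply Rpower_lt; lra. Qed.

Lemma rp_geo d h y j : 0 < d -> 0 < h -> Rpower (d * h ^ j) y = Rpower d y * (Rpower h y) ^ j.
Proof.
  intros hd hh. induction j; simpl.
  - rewrite Rmult_1_r. ring.
  - replace (d * (h * h ^ j)) with ((d * h ^ j) * h) by ring.
    rewrite <- Rpower_mult_distr; [|apply Rmult_lt_0_compat; [auto|apply pow_lt; auto]|auto].
    rewrite IHj. ring.
Qed.

Lemma rp_pow_comb r e k : 0 < r -> Rpower r (- e) * r ^ k = Rpower r (INR k - e).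
Proof.
  intros hr. rewrite <- Rpower_pow by auto. rewrite <- Rpower_plus. f_equal. ring.
Qed.

Lemma geo_sum q N : 0 <= q < 1 -> sumR N (fun j => q ^ j) <= / (1 - q).
Proof.
  intros hq.
  assert (e : sumR N (fun j => q ^ j) * (1 - q) = 1 - q ^ N).
  { induction N; simpl; [ring|]. rewrite Rmult_plus_distr_r, IHN. ring. }
  assert (0 <= q ^ N) by (apply pow_le; lra).
  apply Rmult_le_reg_r with (1 - q); [lra|]. rewrite e, Rinv_l by lra. lra.
Qed.

Lemma sumR_le N f g : (forall j, (j < N)%nat -> f j <= g j) -> sumR N f <= sumR N g.
Proof. induction N; simpl; intros h; [lra|]. pose proof (h N ltac:(lia)). pose proof (IHN ltac:(intros; apply h; lia)). lra. Qed.

Lemma sumR_scal N c f : sumR N (fun j => c * f j) = c * sumR N f.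
Proof. induction N; simpl; [ring|]. rewrite IHN; ring. Qed.

Lemma INR_le_pow2 N : INR N <= 2 ^ N.
Proof.
  induction N; [simpl; lra|]. rewrite S_INR. simpl. assert (1 <= 2 ^ N) by (apply pow_R1_Rle; lra). lra.
Qed.

Lemma pow2_big X : exists N, (1 <= N)%nat /\ X < 2 ^ N.
Proof.
  destruct (INR_unbounded X) as [N hN]. exists (S N). split; [lia|].
  pose proof (INR_le_pow2 (S N)). rewrite S_INR in H. lra.
Qed.


Lemma pow_le1 X k : 0 <= X <= 1 -> X ^ k <= 1.
Proof. intros h. induction k; simpl; [lra|]. assert (0 <= X ^ k) by (apply pow_le; lra). nra. Qed.

Lemma pow_le_self X k : 0 <= X <= 1 -> (1 <= k)%nat -> X ^ k <= X.
Proof.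
  intros hX hk. destruct k; [lia|]. simpl. pose proof (pow_le1 X k hX). nra.
Qed.

Lemma find_dec (r : nat -> R) N rho : (forall j, r (S j) <= r j) -> (1 <= N)%nat ->
  r N <= rho <= r O -> exists j, (j < N)%nat /\ r (S j) <= rho <= r j.
Proof.
  intros hd. induction N; intros hN h; [lia|].
  destruct (Nat.eq_dec N 0).
  - subst. exists O. split; [lia|lra].
  - destruct (Rle_lt_dec (r N) rho).
    + destruct IHN as [j [hj h']]; [lia|lra|]. exists j; split; [lia|auto].
    + exists N. split; [lia|lra].
Qed.

Lemma find_inc (R0 : nat -> R) N rho :
  R0 O < rho <= R0 N -> exists j, (j < N)%nat /\ R0 j < rho <= R0 (S j).
Proof.
  induction N; intros h; [lra|].
  destruct (Rle_lt_dec rho (R0 N)).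
  - destruct IHN as [j [hj h']]; [lra|]. exists j; split; [lia|auto].
  - exists N. split; [lia|lra].
Qed.

Lemma sumR_ext N f g : (forall j, f j = g j) -> sumR N f = sumR N g.
Proof. intros h; induction N; simpl; [reflexivity|]. rewrite IHN, h; reflexivity. Qed.

Definition KD (k : nat) (e : R) : R :=
  Rpower (/ 2) (- e) * 4 ^ k / (1 - Rpower (/ 2) (INR k - e)) + 1.
Definition KO (k : nat) (e : R) : R := 8 ^ k / (1 - Rpower 2 (INR k - e)).

Lemma GD k (p : pt) (d e M : R) : (1 <= k)%nat -> 0 < d -> 0 <= e < INR k -> 0 <= M ->
  exists t delta, wf k t /\ cpos t /\ 0 < delta /\
   (forall z, ninf k z p < delta -> M <= stepval k t z) /\
   (forall z, delta <= ninf k z p <= d -> Rpower (ninf k z p) (- e) <= stepval k t z) /\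
   stepint k t <= KD k e * Rpower d (INR k - e).
Proof.
  intros hk hd he hM.
  set (r := fun j => d * (/ 2) ^ j).
  assert (hr : forall j, 0 < r j) by (intros; unfold r; apply Rmult_lt_0_compat; [auto|apply pow_lt; lra]).
  assert (hrS : forall j, r (S j) = r j * / 2) by (intros; unfold r; simpl; ring).
  set (eps := Rpower d (INR k - e) / (M + 1)).
  assert (heps : 0 < eps) by (unfold eps; apply Rdiv_lt_0_compat; [apply rp_pos|lra]).
  destruct (pow2_big (4 * d / Rmin 1 eps)) as [N [hN1 hN]].
  assert (hmin : 0 < Rmin 1 eps) by (apply Rmin_pos; lra).
  assert (h4 : 4 * r N <= Rmin 1 eps).
  { unfold r. rewrite pow_inv. assert (h2 : 0 < 2 ^ N) by (apply pow_lt; lra).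
    assert (4 * d < Rmin 1 eps * 2 ^ N).
    { apply (Rmult_lt_compat_r (Rmin 1 eps)) in hN; auto. unfold Rdiv in hN.
      rewrite Rmult_assoc, Rinv_l, Rmult_1_r in hN by lra. lra. }
    apply Rmult_le_reg_r with (2 ^ N); auto.
    replace (4 * (d * / 2 ^ N) * 2 ^ N) with (4 * d) by (field; lra). lra. }
  exists ((cl p (2 * r N), cr p (2 * r N), M) ::
          mk N (fun j => cl p (2 * r j)) (fun j => cr p (2 * r j)) (fun j => Rpower (r (S j)) (- e))).
  exists (r N).
  split; [|split; [|split; [|split; [|split]]]].
  - intros a b c hin. destruct hin as [he'|hin].
    + inversion he'; subst. intros i hi. unfold cl, cr. pose proof (hr N); lra.
    + revert a b c hin. apply (wf_mk k). intros j i hi. unfold cl, cr. pose proof (hr j); lra.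
  - intros a b c hin. destruct hin as [he'|hin].
    + inversion he'; subst; auto.
    + revert a b c hin. apply cpos_mk. intros; left; apply rp_pos.
  - auto.
  - intros z hz. simpl. rewrite cube_in by (pose proof (hr N); lra).
    pose proof (sv_nonneg k (mk N (fun j => cl p (2 * r j)) (fun j => cr p (2 * r j)) (fun j => Rpower (r (S j)) (- e))) z
      (cpos_mk _ _ _ _ (fun j => Rlt_le _ _ (rp_pos _ _)))). lra.
  - intros z hz. simpl.
    assert (hM' : 0 <= M * boxind k (cl p (2 * r N)) (cr p (2 * r N)) z)
      by (pose proof (boxind_01 k (cl p (2 * r N)) (cr p (2 * r N)) z); nra).
    destruct (find_dec r N (ninf k z p)) as [j [hj [h1 h2]]]; auto.
    { intros j; rewrite hrS; pose proof (hr j); lra. }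
    { unfold r at 2; simpl; lra. }
    pose proof (sv_mk_ge k N (fun j => cl p (2 * r j)) (fun j => cr p (2 * r j)) (fun j => Rpower (r (S j)) (- e)) z j
      (fun j => Rlt_le _ _ (rp_pos _ _)) hj) as hg. simpl in hg.
    rewrite cube_in in hg by (pose proof (hr j); lra).
    pose proof (rp_anti (r (S j)) (ninf k z p) e ltac:(split; [apply hr|auto]) ltac:(lra)).
    lra.
  - simpl. rewrite si_mk. rewrite vol_cube.
    set (q := Rpower (/ 2) (INR k - e)).
    assert (hq : 0 <= q < 1).
    { unfold q; split; [left; apply rp_pos|]. rewrite rp_inv2. apply rp2_lt1. lra. }
    assert (hterm : forall j, Rpower (r (S j)) (- e) * vol k (cl p (2 * r j)) (cr p (2 * r j))
                     = (Rpower (/ 2) (- e) * 4 ^ k * Rpower d (INR k - e)) * q ^ j).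
    { intros j. rewrite vol_cube. rewrite hrS.
      rewrite <- Rpower_mult_distr by (auto; lra).
      replace ((2 * (2 * r j)) ^ k) with (4 ^ k * r j ^ k) by (rewrite <- Rpow_mult_distr; f_equal; ring).
      replace (Rpower (r j) (- e) * Rpower (/ 2) (- e) * (4 ^ k * r j ^ k))
        with (Rpower (/ 2) (- e) * 4 ^ k * (Rpower (r j) (- e) * r j ^ k)) by ring.
      rewrite rp_pow_comb by auto. unfold r. rewrite rp_geo by lra. unfold q. ring. }
    rewrite (sumR_ext N _ _ hterm), sumR_scal.
    set (D := Rpower d (INR k - e)). assert (hD : 0 < D) by apply rp_pos.
    assert (hX : (2 * (2 * r N)) ^ k <= eps).
    { eapply Rle_trans; [apply pow_le_self; auto|].
      pose proof (hr N). pose proof (Rmin_l 1 eps). split; lra.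
      pose proof (Rmin_r 1 eps). lra. }
    assert (hsmall : M * (2 * (2 * r N)) ^ k <= D).
    { apply Rle_trans with (M * eps). apply Rmult_le_compat_l; auto.
      unfold eps. fold D. apply Rmult_le_reg_r with (M + 1); [lra|].
      unfold Rdiv. replace (M * (D * / (M + 1)) * (M + 1)) with (M * D) by (field; lra). nra. }
    assert (hC0 : 0 <= Rpower (/ 2) (- e) * 4 ^ k * D).
    { pose proof (rp_pos (/2) (- e)). assert (0 < 4 ^ k) by (apply pow_lt; lra).
      apply Rmult_le_pos; [|lra]. apply Rmult_le_pos; lra. }
    pose proof (geo_sum q N hq).
    assert (Rpower (/ 2) (- e) * 4 ^ k * D * sumR N (fun j => q ^ j) <=
            Rpower (/ 2) (- e) * 4 ^ k * D * / (1 - q)) by (apply Rmult_le_compat_l; auto).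
    unfold KD. fold q. unfold Rdiv.
    replace ((Rpower (/ 2) (- e) * 4 ^ k * / (1 - q) + 1) * D) with
      (Rpower (/ 2) (- e) * 4 ^ k * D * / (1 - q) + D) by ring.
    change (fun j : nat => q ^ j) with (pow q) in H0. lra.
Qed.

Lemma GO k (p : pt) (d e Rs : R) : 0 < d -> INR k < e ->
  exists t, wf k t /\ cpos t /\
   (forall z, d < ninf k z p <= Rs -> Rpower (ninf k z p) (- e) <= stepval k t z) /\
   stepint k t <= KO k e * Rpower d (INR k - e).
Proof.
  intros hd he.
  set (r := fun j => d * 2 ^ j).
  assert (hr : forall j, 0 < r j) by (intros; unfold r; apply Rmult_lt_0_compat; [auto|apply pow_lt; lra]).
  assert (hrS : forall j, r (S j) = r j * 2) by (intros; unfold r; simpl; ring).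
  destruct (pow2_big (Rs / d)) as [N [hN1 hN]].
  assert (hRN : Rs < r N).
  { unfold r. apply (Rmult_lt_compat_l d) in hN; auto. unfold Rdiv in hN.
    replace (d * (Rs * / d)) with Rs in hN by (field; lra). lra. }
  exists (mk N (fun j => cl p (2 * r (S j))) (fun j => cr p (2 * r (S j))) (fun j => Rpower (r j) (- e))).
  split; [|split; [|split]].
  - apply (wf_mk k). intros j i hi. unfold cl, cr. pose proof (hr (S j)); lra.
  - apply cpos_mk. intros; left; apply rp_pos.
  - intros z hz.
    destruct (find_inc r N (ninf k z p)) as [j [hj [h1 h2]]].
    { unfold r at 1; simpl. lra. }
    pose proof (sv_mk_ge k N (fun j => cl p (2 * r (S j))) (fun j => cr p (2 * r (S j))) (fun j => Rpower (r j) (- e)) z j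
      (fun j => Rlt_le _ _ (rp_pos _ _)) hj) as hg. simpl in hg.
    rewrite cube_in in hg by (pose proof (hr (S j)); lra).
    pose proof (rp_anti (r j) (ninf k z p) e ltac:(split; [apply hr|lra]) ltac:(pose proof (pos_INR k); lra)).
    lra.
  - rewrite si_mk.
    set (q := Rpower 2 (INR k - e)).
    assert (hq : 0 <= q < 1).
    { unfold q; split; [left; apply rp_pos|]. apply rp2_lt1. lra. }
    set (D := Rpower d (INR k - e)).
    assert (hterm : forall j, Rpower (r j) (- e) * vol k (cl p (2 * r (S j))) (cr p (2 * r (S j)))
                     = (8 ^ k * D) * q ^ j).
    { intros j. rewrite vol_cube. rewrite hrS.
      replace ((2 * (2 * (r j * 2))) ^ k) with (8 ^ k * r j ^ k)
        by (rewrite <- Rpow_mult_distr; f_equal; ring).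
      replace (Rpower (r j) (- e) * (8 ^ k * r j ^ k))
        with (8 ^ k * (Rpower (r j) (- e) * r j ^ k)) by ring.
      rewrite rp_pow_comb by auto. unfold r. rewrite rp_geo by lra. unfold q, D. ring. }
    rewrite (sumR_ext N _ _ hterm), sumR_scal.
    assert (hC0 : 0 <= 8 ^ k * D).
    { assert (0 < 8 ^ k) by (apply pow_lt; lra). pose proof (rp_pos d (INR k - e)). unfold D. nra. }
    pose proof (geo_sum q N hq).
    assert (8 ^ k * D * sumR N (fun j => q ^ j) <= 8 ^ k * D * / (1 - q)) by (apply Rmult_le_compat_l; auto).
    change (fun j : nat => q ^ j) with (pow q) in H0.
    unfold KO. fold q. unfold Rdiv.
    replace (8 ^ k * / (1 - q) * D) with (8 ^ k * D * / (1 - q)) by ring. lra.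
Qed.


Lemma sv_zero k u z : (forall a b c, In (a,b,c) u -> boxind k a b z = 0) -> stepval k u z = 0.
Proof.
  intros h. induction u as [|[[a b] c] u IH]; simpl; [reflexivity|].
  rewrite (h a b c) by (left; reflexivity). rewrite IH by (intros; eapply h; right; eauto). ring.
Qed.

Lemma sv_support k u z : stepval k u z <> 0 ->
  exists a b c, In (a,b,c) u /\ forall i, (i < k)%nat -> a i <= z i < b i.
Proof.
  intros h. destruct (classic (exists a b c, In (a,b,c) u /\ forall i, (i < k)%nat -> a i <= z i < b i)) as [e|ne]; auto.
  exfalso. apply h. apply sv_zero. intros a b c hin.
  destruct (classic (forall i, (i < k)%nat -> a i <= z i < b i)) as [hh|hh].
  - exfalso; apply ne; exists a, b, c; auto.
  - apply not_all_ex_not in hh. destruct hh as [i hi].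
    apply imply_to_and in hi. destruct hi as [hi1 hi2].
    apply boxind_zero with i; auto.
    destruct (Rlt_le_dec (z i) (a i)); [left; auto|]. right.
    destruct (Rlt_le_dec (z i) (b i)); [exfalso; apply hi2; lra| auto].
Qed.

Lemma rpower_nonpos x y : x <= 0 -> Rpower x y = 1.
Proof.
  intros h. assert (hl : ln x = 0) by (unfold ln; case Rlt_dec; intro; [exfalso; lra|reflexivity]). unfold Rpower. rewrite hl, Rmult_0_r. apply exp_0.
Qed.

Definition dbox1 (L : R) : pt -> pt -> Prop := fun a b => 0 <= a 0%nat /\ b 0%nat <= L.
Definition dpt1 (L : R) : pt -> Prop := fun z => 0 < z 0%nat <= L.

Lemma ninf1 z : ninf 1 z (fun _ => 0) = Rabs (z 0%nat).
Proof.
  unfold ninf; simpl. rewrite Rminus_0_r. apply Rmax_right. apply Rabs_pos.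
Qed.

Lemma oneD_bound (g : R -> R) (L K e : R) : 0 < L -> 0 <= K -> 0 <= e < 1 ->
  (forall b, 0 < b <= L -> g b <= K * Rpower b (- e)) ->
  forall S, lower_sums 1 (dbox1 L) (dpt1 L) (fun z => g (z 0%nat)) S ->
    S <= K * (KD 1 e * Rpower L (INR 1 - e)).
Proof.
  intros hL hK he hg S [s [[hs1 hs2] ->]].
  assert (hcs : cpos s) by (intros a b c hin; apply (hs1 a b c hin)).
  destruct (Rle_lt_dec K 0) as [hK0|hK0].
  -
    assert (K = 0) by lra. subst K.
    apply Rle_trans with (stepint 1 (@nil (pt*pt*R))).
    + apply (mono_exc 0 s [] 0).
      * intros a b c hin i hi. apply (hs1 a b c hin); auto.
      * intros a b c hin; destruct hin.
      * intros z hz. simpl.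
        destruct (Rlt_le_dec 0 (z 0%nat)) as [hz0|hz0].
        -- destruct (Rle_lt_dec (z 0%nat) L) as [hzL|hzL].
           ++ pose proof (hs2 z (conj hz0 hzL)). pose proof (hg (z 0%nat) (conj hz0 hzL)). simpl in *. lra.
           ++ rewrite sv_zero; [lra|]. intros a b c hin. apply boxind_zero with 0%nat; [lia|].
              right. destruct (hs1 a b c hin) as [_ [_ [_ hb]]]. lra.
        -- rewrite sv_zero; [lra|]. intros a b c hin. apply boxind_zero with 0%nat; [lia|].
           left. destruct (hs1 a b c hin) as [_ [_ [ha _]]]. lra.
    + simpl. lra.
  - destruct (GD 1 (fun _ => 0) L e (mass s / K) ltac:(lia) hL ltac:(simpl; lra)) as
        [t [delta [hwt [hct [hdel [hsm [hmid hint]]]]]]].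
    { unfold Rdiv; apply Rmult_le_pos; [|left; apply Rinv_0_lt_compat; lra]. clear -hcs. induction s as [|[[a b] c] s IH]; simpl; [lra|].
      assert (0 <= c) by (eapply hcs; left; eauto). assert (0 <= mass s) by (apply IH; intros ? ? ? hin; eapply hcs; right; eauto). lra. }
    apply Rle_trans with (stepint 1 (scs K t)).
    + apply (mono_exc 0 s (scs K t) 0).
      * intros a b c hin i hi. apply (hs1 a b c hin); auto.
      * apply wf_scs; auto.
      * intros z hz. rewrite sv_scs.
        assert (0 <= stepval 1 t z) by (apply sv_nonneg; auto).
        destruct (Rlt_le_dec 0 (z 0%nat)) as [hz0|hz0].
        -- destruct (Rle_lt_dec (z 0%nat) L) as [hzL|hzL].
           ++ pose proof (ninf1 z) as hn. rewrite Rabs_right in hn by lra.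
              destruct (Rlt_le_dec (ninf 1 z (fun _ => 0)) delta) as [hd|hd].
              ** pose proof (hsm z hd). pose proof (sv_mass 1 s z hcs).
                 apply Rle_trans with (mass s); auto.
                 apply Rle_trans with (K * (mass s / K)); [right; field; lra|].
                 apply Rmult_le_compat_l; lra.
              ** pose proof (hmid z ltac:(split; lra)). rewrite hn in H0.
                 pose proof (hs2 z (conj hz0 hzL)). pose proof (hg (z 0%nat) (conj hz0 hzL)). simpl in *.
                 apply Rle_trans with (K * Rpower (z 0%nat) (- e)); [lra|].
                 apply Rmult_le_compat_l; lra.
           ++ rewrite sv_zero; [nra|]. intros a b c hin. apply boxind_zero with 0%nat; [lia|].
              right. destruct (hs1 a b c hin) as [_ [_ [_ hb]]]. lra.
        -- rewrite sv_zero; [nra|]. intros a b c hin. apply boxind_zero with 0%nat; [lia|].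
           left. destruct (hs1 a b c hin) as [_ [_ [ha _]]]. lra.
    + rewrite si_scs. apply Rmult_le_compat_l; lra.
Qed.

Lemma int_nonneg (L : R) (g : R -> R) :
  (forall b, 0 < b <= L -> 0 <= g b) ->
  (exists Bd, forall S, lower_sums 1 (dbox1 L) (dpt1 L) (fun z => g (z 0%nat)) S -> S <= Bd) ->
  0 <= int_0_L L g.
Proof.
  intros hg [Bd hB].
  set (E := lower_sums 1 (dbox1 L) (dpt1 L) (fun z => g (z 0%nat))).
  assert (hE0 : E 0).
  { exists (@nil (pt*pt*R)). split; [|reflexivity]. split.
    - intros a b c hin; destruct hin.
    - intros z hz. simpl. apply hg. exact hz. }
  assert (hex : exists I, is_lub E I).
  { destruct (completeness E) as [m hm]. exists Bd. intros S hS. apply hB; auto.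
    exists 0; auto. exists m; auto. }
  unfold int_0_L.
  pose proof (epsilon_spec (inhabits 0) (fun I => is_lub E I) hex) as h.
  destruct h as [hub _]. apply hub. exact hE0.
Qed.


Lemma galpha_le n alpha A B z y : 0 < A -> 0 < B -> 0 < alpha < 2 -> (2 <= n)%nat ->
  0 < z (n - 1)%nat -> 0 < y (n - 1)%nat -> 0 < edist n z y ->
  Galpha n alpha A B z y <= A * Rpower (edist n z y) (- (INR n - alpha)).
Proof.
  intros hA hB ha hn hz hy hd.
  unfold Galpha. cbv zeta.
  set (s := edist n z y ^ 2). set (tau := 4 * z (n - 1)%nat * y (n - 1)%nat).
  assert (hs : 0 < s) by (unfold s; apply pow_lt; auto).
  assert (htau : 0 < tau) by (unfold tau; apply Rmult_lt_0_compat; [lra|auto]).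
  set (p := (INR n - 2) / 2).
  assert (hp : 0 <= p).
  { unfold p. assert (2 <= INR n) by (replace 2 with (INR 2) by (simpl; ring); apply le_INR; auto). lra. }
  set (g := fun b => Rpower (s - tau * b) p / (Rpower b (alpha / 2) * (1 + b))).
  set (K := Rmax 1 (Rpower s p)).
  assert (hK : 1 <= K) by apply Rmax_l.
  assert (hgle : forall b, 0 < b <= s / tau -> g b <= K * Rpower b (- (alpha / 2))).
  { intros b hb. unfold g. rewrite Rpower_Ropp.
    assert (hnum : 0 <= Rpower (s - tau * b) p <= K).
    { split; [left; apply rp_pos|].
      destruct (Rle_lt_dec (s - tau * b) 0) as [h0|h0].
      - rewrite rpower_nonpos by auto. auto.
      - eapply Rle_trans; [|apply Rmax_r]. apply Rle_Rpower_l; auto.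
        split; auto. assert (0 <= tau * b) by (apply Rmult_le_pos; lra). lra. }
    pose proof (rp_pos b (alpha / 2)).
    unfold Rdiv. apply Rle_trans with (Rpower (s - tau * b) p * / Rpower b (alpha / 2)).
    - apply Rmult_le_compat_l; [lra|]. apply Rinv_le_contravar; auto.
      rewrite <- (Rmult_1_r (Rpower b (alpha / 2))) at 1. apply Rmult_le_compat_l; lra.
    - apply Rmult_le_compat_r; [left; apply Rinv_0_lt_compat; auto| lra]. }
  assert (hI : 0 <= int_0_L (s / tau) g).
  { apply int_nonneg.
    - intros b hb. unfold g. unfold Rdiv. apply Rmult_le_pos; [left; apply rp_pos|].
      left. apply Rinv_0_lt_compat. apply Rmult_lt_0_compat; [apply rp_pos|lra].
    - exists (K * (KD 1 (alpha / 2) * Rpower (s / tau) (INR 1 - alpha / 2))).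
      apply oneD_bound; auto.
      + unfold Rdiv; apply Rmult_lt_0_compat; auto. apply Rinv_0_lt_compat; auto.
      + lra.
      + lra. }
  fold g.
  assert (hcoef : 0 <= B / Rpower (s + tau) p).
  { unfold Rdiv; apply Rmult_le_pos; [lra|left; apply Rinv_0_lt_compat; apply rp_pos]. }
  assert (hfac : 0 < A / Rpower s ((INR n - alpha) / 2)).
  { unfold Rdiv; apply Rmult_lt_0_compat; auto. apply Rinv_0_lt_compat; apply rp_pos. }
  assert (hbr : 1 - B / Rpower (s + tau) p * int_0_L (s / tau) g <= 1).
  { assert (0 <= B / Rpower (s + tau) p * int_0_L (s / tau) g) by (apply Rmult_le_pos; auto). lra. }
  apply Rle_trans with (A / Rpower s ((INR n - alpha) / 2)).
  { rewrite <- (Rmult_1_r (A / Rpower s ((INR n - alpha) / 2))) at 2. apply Rmult_le_compat_l; lra. }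
  unfold s. rewrite <- (Rpower_pow 2 (edist n z y)) by auto. rewrite Rpower_mult.
  rewrite Rpower_Ropp. unfold Rdiv. right. f_equal. f_equal. f_equal. simpl. field.
Qed.


Lemma sumR_nonneg k f : (forall i, (i < k)%nat -> 0 <= f i) -> 0 <= sumR k f.
Proof. induction k; simpl; intros h; [lra|]. pose proof (h k ltac:(lia)). pose proof (IHk ltac:(intros; apply h; lia)). lra. Qed.

Lemma sumR_term k f i : (forall i, (i < k)%nat -> 0 <= f i) -> (i < k)%nat -> f i <= sumR k f.
Proof.
  induction k; simpl; intros h hi; [lia|]. destruct (Nat.eq_dec i k).
  - subst. pose proof (sumR_nonneg k f ltac:(intros; apply h; lia)). lra.
  - pose proof (IHk ltac:(intros; apply h; lia) ltac:(lia)). pose proof (h k ltac:(lia)). lra.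
Qed.

Lemma coord_le_edist n x z i : (i < n)%nat -> Rabs (x i - z i) <= edist n x z.
Proof.
  intros hi. unfold edist.
  rewrite <- (sqrt_pow2 (Rabs (x i - z i))) by apply Rabs_pos.
  apply sqrt_le_1_alt. rewrite pow2_abs.
  apply (sumR_term n (fun i => (x i - z i) ^ 2)); auto.
  intros; apply pow2_ge_0.
Qed.

Lemma ninf_le_edist n x z : ninf n z x <= edist n x z.
Proof.
  apply ninf_le. unfold edist; apply sqrt_pos.
  intros i hi. rewrite Rabs_minus_sym. apply coord_le_edist; auto.
Qed.
Lemma ninf_le_edist' n z y : ninf n z y <= edist n z y.
Proof.
  apply ninf_le. unfold edist; apply sqrt_pos.
  intros i hi. apply coord_le_edist; auto.
Qed.

Lemma edist_le_ninf n x y : edist n x y <= sqrt (INR n) * ninf n y x.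
Proof.
  unfold edist. rewrite <- (sqrt_pow2 (ninf n y x)) by apply ninf_ge0.
  rewrite <- sqrt_mult_alt by apply pos_INR.
  apply sqrt_le_1_alt.
  assert (forall k, (k <= n)%nat -> sumR k (fun i => (x i - y i) ^ 2) <= INR k * ninf n y x ^ 2).
  { induction k; intros hk; [simpl; lra|]. cbn [sumR].
    rewrite S_INR. pose proof (IHk ltac:(lia)).
    assert ((x k - y k) ^ 2 <= ninf n y x ^ 2).
    { rewrite <- (pow2_abs (x k - y k)). apply pow_incr. split; [apply Rabs_pos|].
      rewrite Rabs_minus_sym. apply ninf_coord. lia. }
    rewrite Rmult_plus_distr_r, Rmult_1_l. lra. }
  apply H; lia.
Qed.

Lemma edist_refl n x z : 0 < x (n - 1)%nat -> 0 < z (n - 1)%nat ->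
  edist n x z <= edist n (refl n x) z.
Proof.
  intros hx hz. unfold edist. apply sqrt_le_1_alt.
  apply sumR_le. intros i hi. unfold refl.
  destruct (Nat.eqb_spec i (n - 1)).
  - subst. nra.
  - lra.
Qed.

Lemma g2m_facts n m c x z : 0 < c -> (2 * m <= n)%nat ->
  0 < x (n - 1)%nat -> 0 < z (n - 1)%nat -> 0 < ninf n z x ->
  0 <= G2m n m c x z /\ G2m n m c x z <= c * Rpower (ninf n z x) (- (INR n - INR (2 * m))).
Proof.
  intros hc hm hx hz h0.
  assert (ha : 0 <= INR n - INR (2 * m)) by (pose proof (le_INR _ _ hm); lra).
  pose proof (ninf_le_edist n x z).
  pose proof (edist_refl n x z hx hz).
  unfold G2m.
  replace (INR (2 * m) - INR n) with (- (INR n - INR (2 * m))) by ring.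
  pose proof (rp_anti (edist n x z) (edist n (refl n x) z) _ ltac:(split; lra) ha).
  pose proof (rp_pos (edist n (refl n x) z) (- (INR n - INR (2 * m)))).
  pose proof (rp_anti (ninf n z x) (edist n x z) _ ltac:(split; lra) ha).
  split.
  - apply Rmult_le_pos; lra.
  - nra.
Qed.


Lemma rp_inv w y : 0 < w -> Rpower (/ w) y = Rpower w (- y).
Proof. intros hw. unfold Rpower. rewrite ln_Rinv by lra. f_equal. ring. Qed.

Lemma key n m alpha c A B x y z : 0 < c -> 0 < A -> 0 < B -> 0 < alpha < 2 -> (2 <= n)%nat ->
  (2 * m <= n)%nat -> 0 < x (n - 1)%nat -> 0 < y (n - 1)%nat -> 0 < z (n - 1)%nat ->
  0 < ninf n z x -> 0 < ninf n z y ->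
  G2t_integrand n m alpha c A B x y z <=
  c * A * Rpower (ninf n z x) (- (INR n - INR (2 * m))) * Rpower (ninf n z y) (- (INR n - alpha)).
Proof.
  intros hc hA hB ha hn hm hx hy hz h1 h2.
  unfold G2t_integrand.
  destruct (g2m_facts n m c x z hc hm hx hz h1) as [g0 g1].
  pose proof (ninf_le_edist' n z y).
  pose proof (galpha_le n alpha A B z y hA hB ha hn hz hy ltac:(lra)).
  assert (hb : 0 <= INR n - alpha).
  { assert (2 <= INR n) by (replace 2 with (INR 2) by (simpl; ring); apply le_INR; auto). lra. }
  pose proof (rp_anti (ninf n z y) (edist n z y) _ ltac:(split; lra) hb).
  pose proof (rp_pos (ninf n z y) (- (INR n - alpha))).
  pose proof (rp_pos (edist n z y) (- (INR n - alpha))).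
  apply Rle_trans with (G2m n m c x z * (A * Rpower (ninf n z y) (- (INR n - alpha)))).
  - apply Rmult_le_compat_l; auto. nra.
  - replace (c * A * Rpower (ninf n z x) (- (INR n - INR (2 * m))) * Rpower (ninf n z y) (- (INR n - alpha)))
      with ((c * Rpower (ninf n z x) (- (INR n - INR (2 * m)))) * (A * Rpower (ninf n z y) (- (INR n - alpha)))) by ring.
    apply Rmult_le_compat_r; auto. nra.
Qed.

Fixpoint supp (n : nat) (u : step) (x : pt) : R :=
  match u with [] => 0 | (a,b,c)::u' => ninf n a x + ninf n b x + supp n u' x end.

Lemma supp_ge0 n u x : 0 <= supp n u x.
Proof.
  induction u as [|[[a b] c] u IH]; simpl; [lra|].
  pose proof (ninf_ge0 n a x); pose proof (ninf_ge0 n b x); lra.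
Qed.

Lemma supp_in n u x a b c z : In (a,b,c) u -> (forall i, (i < n)%nat -> a i <= z i < b i) ->
  ninf n z x <= supp n u x.
Proof.
  intros hin hz. induction u as [|[[a' b'] c'] u IH]; simpl; [destruct hin|].
  pose proof (ninf_ge0 n a' x); pose proof (ninf_ge0 n b' x). pose proof (supp_ge0 n u x).
  destruct hin as [he|hin].
  - inversion he; subst.
    assert (ninf n z x <= ninf n a x + ninf n b x).
    { apply ninf_le; [lra|]. intros i hi. pose proof (hz i hi).
      pose proof (ninf_coord n a x i hi). pose proof (ninf_coord n b x i hi).
      unfold Rabs at 1; destruct Rcase_abs.
      - pose proof (abs2 (a i - x i)). lra.
      - pose proof (Rle_abs (b i - x i)). lra. }
    lra.
  - pose proof (IH hin). lra.
Qed.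

Lemma KD_pos k e : 0 <= e < INR k -> 0 < KD k e.
Proof.
  intros he. unfold KD.
  assert (Rpower (/ 2) (INR k - e) < 1) by (rewrite rp_inv2; apply rp2_lt1; lra).
  pose proof (rp_pos (/ 2) (- e)). assert (0 < 4 ^ k) by (apply pow_lt; lra).
  assert (0 <= Rpower (/ 2) (- e) * 4 ^ k / (1 - Rpower (/ 2) (INR k - e))).
  { unfold Rdiv. apply Rmult_le_pos; [nra|]. left; apply Rinv_0_lt_compat; lra. }
  lra.
Qed.

Lemma KO_pos k e : INR k < e -> 0 < KO k e.
Proof.
  intros he. unfold KO.
  assert (Rpower 2 (INR k - e) < 1) by (apply rp2_lt1; lra).
  unfold Rdiv. apply Rmult_lt_0_compat; [apply pow_lt; lra|]. apply Rinv_0_lt_compat; lra.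
Qed.


Theorem lemma2p1 (n m : nat) (alpha c A B : R)
  (hn : (2 <= n)%nat) (hm : (1 <= m)%nat) (h2m : (2 * m < n)%nat)
  (ha0 : 0 < alpha) (ha2 : alpha < 2)
  (ht : INR m + alpha / 2 < INR n / 2)
  (hc : 0 < c) (hA : 0 < A) (hB : 0 < B) :
  exists C, 0 < C /\
    forall x y : pt, in_Hplus n x -> in_Hplus n y -> pt_neq n x y ->
      integral_le n (Hbox n) (in_Hplus n) (G2t_integrand n m alpha c A B x y)
        (C / Rpower (edist n x y) (INR n - 2 * (INR m + alpha / 2))).
Proof.
  set (a := INR n - INR (2 * m)). set (b := INR n - alpha).
  set (e' := a + b - INR n).
  assert (h2mR : INR (2 * m) = 2 * INR m) by (rewrite mult_INR; simpl; ring).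
  assert (hm1 : 1 <= INR m) by (replace 1 with (INR 1) by reflexivity; apply le_INR; auto).
  assert (hnR : 2 <= INR n) by (replace 2 with (INR 2) by (simpl; ring); apply le_INR; auto).
  assert (ha : 0 <= a < INR n) by (unfold a; rewrite h2mR; split; lra).
  assert (hb : 0 <= b < INR n) by (unfold b; lra).
  assert (he' : 0 < e') by (unfold e', a, b; rewrite h2mR; lra).
  assert (hab : INR n < a + b) by (unfold e' in he'; lra).
  assert (hsq : 0 < sqrt (INR n)) by (apply sqrt_lt_R0; lra).
  set (K0 := KD n a + KD n b + Rpower 3 b * KO n (a + b)).
  assert (hK0 : 0 < K0).
  { unfold K0. pose proof (KD_pos n a ha). pose proof (KD_pos n b hb). pose proof (KO_pos n (a + b) hab).
    pose proof (rp_pos 3 b). nra. }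
  exists (c * A * K0 * Rpower (2 * sqrt (INR n)) e').
  split.
  { pose proof (rp_pos (2 * sqrt (INR n)) e'). apply Rmult_lt_0_compat; [|auto].
    apply Rmult_lt_0_compat; [|auto]. apply Rmult_lt_0_compat; auto. }
  intros x y hx hy hneq S [s [[hs1 hs2] ->]].
  unfold in_Hplus in hx, hy.
  set (Dxy := ninf n y x).
  assert (hD : 0 < Dxy).
  { apply not_all_ex_not in hneq. destruct hneq as [i hi]. apply imply_to_and in hi.
    destruct hi as [hi1 hi2]. pose proof (ninf_coord n y x i hi1).
    assert (0 < Rabs (y i - x i)) by (apply Rabs_pos_lt; intro; apply hi2; lra).
    unfold Dxy; lra. }
  set (d := Dxy / 2). assert (hd : 0 < d) by (unfold d; lra).
  assert (hcs : cpos s) by (intros a0 b0 c0 hin; apply (hs1 a0 b0 c0 hin)).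
  set (M := mass s).
  assert (hM : 0 <= M).
  { unfold M. clear -hcs. induction s as [|[[a b] c] s IH]; simpl; [lra|].
    assert (0 <= c) by (eapply hcs; left; eauto). assert (0 <= mass s) by (apply IH; intros ? ? ? hin; eapply hcs; right; eauto). lra. }
  set (lA := c * A * Rpower d (- b)). set (lB := c * A * Rpower d (- a)). set (lC := c * A * Rpower 3 b).
  assert (hlA : 0 < lA) by (unfold lA; pose proof (rp_pos d (- b)); apply Rmult_lt_0_compat; [nra|auto]).
  assert (hlB : 0 < lB) by (unfold lB; pose proof (rp_pos d (- a)); apply Rmult_lt_0_compat; [nra|auto]).
  assert (hlC : 0 < lC) by (unfold lC; pose proof (rp_pos 3 b); apply Rmult_lt_0_compat; [nra|auto]).
  assert (hMA : 0 <= M / lA) by (unfold Rdiv; apply Rmult_le_pos; [auto|left; apply Rinv_0_lt_compat; auto]).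
  assert (hMB : 0 <= M / lB) by (unfold Rdiv; apply Rmult_le_pos; [auto|left; apply Rinv_0_lt_compat; auto]).
  destruct (GD n x d a (M / lA) ltac:(lia) hd ha hMA) as [tA [dA [wA [cA [hdA [smA [midA intA]]]]]]].
  destruct (GD n y d b (M / lB) ltac:(lia) hd hb hMB) as [tB [dB [wB [cB [hdB [smB [midB intB]]]]]]].
  destruct (GO n x d (a + b) (supp n s x) hd hab) as [tC [wC [cC [midC intC]]]].
  set (T := scs lA tA ++ scs lB tB ++ scs lC tC).
  assert (hnS : S (n - 1) = n) by lia.
  assert (hmono : stepint n s <= stepint n T).
  { pose proof (mono_exc (n - 1) s T 0) as hmo. rewrite hnS in hmo. apply hmo.
    - intros a0 b0 c0 hin i hi. apply (hs1 a0 b0 c0 hin); auto.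
    - unfold T. repeat apply wf_app; apply wf_scs; auto.
    - intros z hz. unfold T. rewrite !sv_app, !sv_scs.
      pose proof (sv_nonneg n tA z cA). pose proof (sv_nonneg n tB z cB). pose proof (sv_nonneg n tC z cC).
      assert (hpos : 0 <= lA * stepval n tA z + (lB * stepval n tB z + lC * stepval n tC z)) by nra.
      destruct (Rlt_le_dec (z (n - 1)%nat) 0) as [hzn|hzn].
      + rewrite sv_zero; auto. intros a0 b0 c0 hin. apply boxind_zero with (n - 1)%nat; [lia|].
        left. destruct (hs1 a0 b0 c0 hin) as [_ [_ hb0]]. unfold Hbox in hb0. lra.
      + assert (hz0 : 0 < z (n - 1)%nat) by lra.
        destruct (Rle_lt_dec (stepval n s z) 0) as [hs0|hs0]; [lra|].
        destruct (sv_support n s z ltac:(lra)) as [a0 [b0 [c0 [hin hin2]]]].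
        pose proof (supp_in n s x a0 b0 c0 z hin hin2) as hsupp.
        pose proof (sv_mass n s z hcs) as hmass. fold M in hmass.
        destruct (Rlt_le_dec (ninf n z x) dA) as [hxA|hxA].
        { pose proof (smA z hxA).
          assert (M <= lA * stepval n tA z).
          { apply Rle_trans with (lA * (M / lA)); [right; field; lra|]. apply Rmult_le_compat_l; lra. }
          nra. }
        destruct (Rlt_le_dec (ninf n z y) dB) as [hyB|hyB].
        { pose proof (smB z hyB).
          assert (M <= lB * stepval n tB z).
          { apply Rle_trans with (lB * (M / lB)); [right; field; lra|]. apply Rmult_le_compat_l; lra. }
          nra. }
        pose (rx := ninf n z x). pose (ry := ninf n z y). fold rx in hxA, hsupp. fold ry in hyB.
        assert (hrx : 0 < rx) by lra. assert (hry : 0 < ry) by lra.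
        pose proof (hs2 z hz0) as hf.
        pose proof (key n m alpha c A B x y z hc hA hB ltac:(lra) hn ltac:(lia) hx hy hz0 hrx hry) as hk.
        fold a b rx ry in hk.
        assert (htri1 : Dxy <= rx + ry).
        { unfold Dxy. apply ninf_le; [lra|]. intros i hi.
          pose proof (ninf_coord n z x i hi) as q1. pose proof (ninf_coord n z y i hi) as q2. fold rx in q1. fold ry in q2.
          replace (y i - x i) with ((z i - x i) + - (z i - y i)) by ring.
          pose proof (Rabs_triang (z i - x i) (- (z i - y i))) as q3. rewrite Rabs_Ropp in q3. lra. }
        assert (htri2 : rx <= ry + Dxy).
        { unfold rx. apply ninf_le; [lra|]. intros i hi.
          pose proof (ninf_coord n z y i hi) as q1. pose proof (ninf_coord n y x i hi) as q2. fold ry in q1. fold Dxy in q2.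
          replace (z i - x i) with ((z i - y i) + (y i - x i)) by ring.
          pose proof (Rabs_triang (z i - y i) (y i - x i)) as q3. lra. }
        pose proof (rp_pos rx (- a)). pose proof (rp_pos ry (- b)).
        destruct (Rle_lt_dec rx d) as [hxd|hxd].
        { assert (hyd : d <= ry) by (unfold d in *; lra).
          pose proof (rp_anti d ry b ltac:(lra) ltac:(lra)).
          pose proof (midA z ltac:(split; unfold rx in *; lra)) as q7. fold rx in q7.
          assert (c * A * Rpower rx (- a) * Rpower ry (- b) <= lA * stepval n tA z).
          { apply Rle_trans with (lA * Rpower rx (- a)).
            - unfold lA. assert (0 < c * A) by nra.
              replace (c * A * Rpower d (- b) * Rpower rx (- a)) with (c * A * Rpower rx (- a) * Rpower d (- b)) by ring.
              apply Rmult_le_compat_l; nra.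
            - apply Rmult_le_compat_l; lra. }
          nra. }
        destruct (Rle_lt_dec ry d) as [hyd|hyd].
        { assert (hxd' : d <= rx) by lra.
          pose proof (rp_anti d rx a ltac:(lra) ltac:(lra)).
          pose proof (midB z ltac:(split; unfold ry in *; lra)) as q7. fold ry in q7.
          assert (c * A * Rpower rx (- a) * Rpower ry (- b) <= lB * stepval n tB z).
          { apply Rle_trans with (lB * Rpower ry (- b)).
            - unfold lB. assert (0 < c * A) by nra.
              replace (c * A * Rpower d (- a) * Rpower ry (- b)) with (c * A * Rpower ry (- b) * Rpower d (- a)) by ring.
              replace (c * A * Rpower rx (- a) * Rpower ry (- b)) with (c * A * Rpower ry (- b) * Rpower rx (- a)) by ring.
              apply Rmult_le_compat_l; nra.
            - apply Rmult_le_compat_l; lra. }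
          nra. }
        assert (h3 : rx * / 3 <= ry) by (unfold d in *; lra).
        pose proof (rp_anti (rx * / 3) ry b ltac:(split; lra) ltac:(lra)) as h3b.
        rewrite <- Rpower_mult_distr in h3b by lra. rewrite rp_inv in h3b by lra.
        replace (- - b) with b in h3b by ring.
        pose proof (midC z ltac:(split; unfold rx in *; lra)) as q7. fold rx in q7.
        assert (c * A * Rpower rx (- a) * Rpower ry (- b) <= lC * stepval n tC z).
        { apply Rle_trans with (lC * Rpower rx (- (a + b))).
          - unfold lC. replace (- (a + b)) with (- a + - b) by ring. rewrite Rpower_plus.
            pose proof (rp_pos 3 b). assert (0 < c * A) by nra.
            replace (c * A * Rpower 3 b * (Rpower rx (- a) * Rpower rx (- b)))
              with ((c * A * Rpower rx (- a)) * (Rpower rx (- b) * Rpower 3 b)) by ring.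
            apply Rmult_le_compat_l; [nra|]. lra.
          - apply Rmult_le_compat_l; lra. }
        nra. }
  assert (hexp : INR n - 2 * (INR m + alpha / 2) = e'). { unfold e', a, b. rewrite h2mR. field. }
  rewrite hexp.
  set (P := Rpower d (INR n - (a + b))).
  assert (hsT : stepint n T <= c * A * K0 * P).
  { unfold T. rewrite !si_app, !si_scs.
    assert (eA : lA * (KD n a * Rpower d (INR n - a)) = c * A * KD n a * P).
    { unfold lA, P. replace (INR n - (a + b)) with (- b + (INR n - a)) by ring. rewrite Rpower_plus. ring. }
    assert (eB : lB * (KD n b * Rpower d (INR n - b)) = c * A * KD n b * P).
    { unfold lB, P. replace (INR n - (a + b)) with (- a + (INR n - b)) by ring. rewrite Rpower_plus. ring. }
    assert (eC : lC * (KO n (a + b) * Rpower d (INR n - (a + b))) = c * A * (Rpower 3 b * KO n (a + b)) * P).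
    { unfold lC, P. ring. }
    assert (lA * stepint n tA <= lA * (KD n a * Rpower d (INR n - a))) by (apply Rmult_le_compat_l; lra).
    assert (lB * stepint n tB <= lB * (KD n b * Rpower d (INR n - b))) by (apply Rmult_le_compat_l; lra).
    assert (lC * stepint n tC <= lC * (KO n (a + b) * Rpower d (INR n - (a + b)))) by (apply Rmult_le_compat_l; lra).
    unfold K0. lra. }
  set (E := edist n x y).
  assert (hE : 0 < E).
  { apply not_all_ex_not in hneq. destruct hneq as [i hi]. apply imply_to_and in hi.
    destruct hi as [hi1 hi2]. pose proof (coord_le_edist n x y i hi1).
    assert (0 < Rabs (x i - y i)) by (apply Rabs_pos_lt; intro; apply hi2; lra).
    unfold E; lra. }
  assert (hEd : E * / (2 * sqrt (INR n)) <= d).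
  { pose proof (edist_le_ninf n x y). fold E Dxy in H. unfold d.
    apply Rmult_le_reg_r with (2 * sqrt (INR n)); [lra|].
    rewrite Rmult_assoc, Rinv_l by lra. nra. }
  assert (hP : P <= Rpower E (- e') * Rpower (2 * sqrt (INR n)) e').
  { unfold P. replace (INR n - (a + b)) with (- e') by (unfold e'; ring).
    eapply Rle_trans. apply rp_anti; [split; [|exact hEd]|lra].
    apply Rmult_lt_0_compat; [auto|apply Rinv_0_lt_compat; lra].
    rewrite <- Rpower_mult_distr by (auto; apply Rinv_0_lt_compat; lra).
    rewrite rp_inv by lra. replace (- - e') with e' by ring. lra. }
  unfold Rdiv. rewrite <- Rpower_Ropp.
  assert (0 < c * A * K0) by (apply Rmult_lt_0_compat; [nra|auto]).
  apply Rle_trans with (stepint n T); auto.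
  apply Rle_trans with (c * A * K0 * P); auto.
  replace (c * A * K0 * Rpower (2 * sqrt (INR n)) e' * Rpower E (- e'))
    with (c * A * K0 * (Rpower E (- e') * Rpower (2 * sqrt (INR n)) e')) by ring.
  apply Rmult_le_compat_l; lra.
Qed.
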